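(* Let $\kappa$ be a regular cardinal and let $\mathcal{T}$ be a countable complete first-order theory in a countable relational vocabulary $L$. Let $\eta\in\kappa^\kappa$ be such that $M_\eta\models\mathcal{T}$, and suppose that for every $\alpha<\kappa^+$ there is $\xi\in\kappa^\kappa$ such that $M_\xi\models\mathcal{T}$, $M_\xi\not\cong M_\eta$ and $M_\xi\equiv^\alpha_{\kappa^+\kappa}M_\eta$. Then $\mathrm{Orb}(M_\eta)=\{\zeta\in\kappa^\kappa\mid M_\zeta\cong M_\eta\}$ is not $\kappa$-Borel.
   Context: Coding of structures: $L=\{Q_m\mid m<\omega\}$ is a countable relational vocabulary and $\pi:\kappa^{<\omega}\to\kappa$ is a fixed bijection. For $\eta\in\kappa^\kappa$, $M_\eta$ is the $L$-structure with domain $\kappa$ in which, for $(a_1,\dots,a_n)\in\kappa^n$, $(a_1,\dots,a_n)\in Q_m^{M_\eta}$ iff $Q_m$ has arity $n$ and $\eta(\pi(m,a_1,\dots,a_n))>0$. $M\equiv^\alpha_{\kappa^+\kappa}N$ means $M$ and $N$ satisfy the same $L_{\kappa^+\kappa}$-sentences of quantifier rank at most $\alpha$. Topology: for $X\subseteq\kappa$ with $|X|<\kappa$ and $\eta:X\to\kappa$, let $N_\eta=\{\zeta\in\kappa^\kappa\mid \eta\subseteq\zeta\}$; these sets together with $\emptyset$ are the basic $\kappa$-open sets. The $\kappa$-Borel subsets of $\kappa^\kappa$ form the smallest class containing the basic $\kappa$-open sets and closed under complements, unions of at most $\kappa$ sets and intersections of at most $\kappa$ sets. *)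

(* Defs.v *)
From Stdlib Require Import List Arith.
Import ListNotations.

(* |X| < |K| : there is no injection of K into X. *)
Definition card_lt {K : Type} (X : K -> Prop) : Prop :=
  ~ exists f : K -> K, (forall x y, f x = f y -> x = y) /\ (forall k, X (f k)).

Definition regular_cardinal (K : Type) (lt : K -> K -> Prop) : Prop :=
  (forall x, ~ lt x x) /\
  (forall x y z, lt x y -> lt y z -> lt x z) /\
  (forall x y, lt x y \/ x = y \/ lt y x) /\
  well_founded lt /\
  (exists f : nat -> K, forall i j, f i = f j -> i = j) /\
  (* an initial ordinal (cardinal): every proper initial segment is smaller *)
  (forall x, card_lt (fun y => lt y x)) /\
  (* regular: every subset of size < kappa is bounded *)
  (forall X : K -> Prop, card_lt X -> exists b, forall x, X x -> lt x b).

Definition is_zero {K : Type} (lt : K -> K -> Prop) (z : K) : Prop :=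
  forall y, ~ lt y z.

(* k is the finite ordinal m, seen as an element of kappa *)
Definition is_nth {K : Type} (lt : K -> K -> Prop) (m : nat) (k : K) : Prop :=
  exists f : nat -> K,
    (forall i j, i < m -> j < m -> f i = f j -> i = j) /\
    (forall y, lt y k <-> exists i, i < m /\ f i = y).

(* ---------- L-structures, L = {Q_m | m < omega} with arity ar m ---------- *)

Record Lstr := { dom : Type; rel : nat -> list dom -> Prop }.

(* M_eta : domain kappa, (a_1..a_n) in Q_m iff ar m = n and
   eta(pi(m, a_1, ..., a_n)) > 0 *)
Definition M_code {K : Type} (lt : K -> K -> Prop) (ar : nat -> nat)
  (pi : list K -> K) (eta : K -> K) : Lstr :=
  {| dom := K;
     rel := fun m s => length s = ar m /\
              exists k, is_nth lt m k /\ ~ is_zero lt (eta (pi (k :: s))) |}.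

Definition iso (ar : nat -> nat) (M N : Lstr) : Prop :=
  exists h : dom M -> dom N,
    (exists g : dom N -> dom M, (forall x, g (h x) = x) /\ (forall y, h (g y) = y)) /\
    (forall m (s : list (dom M)), length s = ar m ->
        (rel M m s <-> rel N m (map h s))).

Inductive fo : Type :=
| FRel (m : nat) (vs : list nat)
| FEq (i j : nat)
| FNeg (p : fo)
| FAnd (p q : fo)
| FEx (i : nat) (p : fo).

Fixpoint fo_sat (ar : nat -> nat) (M : Lstr) (s : nat -> dom M) (p : fo) : Prop :=
  match p with
  | FRel m vs => length vs = ar m /\ rel M m (map s vs)
  | FEq i j => s i = s j
  | FNeg q => ~ fo_sat ar M s q
  | FAnd q r => fo_sat ar M s q /\ fo_sat ar M s r
  | FEx i q => exists d, fo_sat ar M (fun j => if Nat.eqb j i then d else s j) q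
  end.

Fixpoint fo_free (p : fo) (x : nat) : Prop :=
  match p with
  | FRel _ vs => In x vs
  | FEq i j => x = i \/ x = j
  | FNeg q => fo_free q x
  | FAnd q r => fo_free q x \/ fo_free r x
  | FEx i q => x <> i /\ fo_free q x
  end.

Definition fo_sentence (p : fo) : Prop := forall x, ~ fo_free p x.

Definition fo_models (ar : nat -> nat) (M : Lstr) (T : fo -> Prop) : Prop :=
  forall p, T p -> forall s, fo_sat ar M s p.

(* complete (consistent) theory, semantically: it has a model and decides
   every sentence. *)
Definition complete_theory (ar : nat -> nat) (T : fo -> Prop) : Prop :=
  (forall p, T p -> fo_sentence p) /\
  (exists M : Lstr, inhabited (dom M) /\ fo_models ar M T) /\
  (forall p, fo_sentence p ->
     (forall M : Lstr, inhabited (dom M) -> fo_models ar M T ->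
        forall s, fo_sat ar M s p) \/
     (forall M : Lstr, inhabited (dom M) -> fo_models ar M T ->
        forall s, fo_sat ar M s (FNeg p))).

(* ---------- L_{kappa^+ kappa}, variables indexed by kappa ---------- *)

Inductive iform (K : Type) : Type :=
| IRel (m : nat) (vs : list K)
| IEq (x y : K)
| INeg (p : iform K)
| IAnd (A : K -> Prop) (F : K -> iform K)
| IEx (X : K -> Prop) (p : iform K).
Arguments IRel {K}. Arguments IEq {K}. Arguments INeg {K}.
Arguments IAnd {K}. Arguments IEx {K}.

Fixpoint isat {K : Type} (ar : nat -> nat) (M : Lstr) (s : K -> dom M)
  (p : iform K) : Prop :=
  match p with
  | IRel m vs => length vs = ar m /\ rel M m (map s vs)
  | IEq x y => s x = s y
  | INeg q => ~ isat ar M s q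
  | IAnd A F => forall k, A k -> isat ar M s (F k)
  | IEx X q => exists s' : K -> dom M,
      (forall x, ~ X x -> s' x = s x) /\ isat ar M s' q
  end.

(* well-formed: quantifier blocks have fewer than kappa variables
   (conjunctions are indexed by subsets of kappa, so have size <= kappa) *)
Fixpoint iwf {K : Type} (p : iform K) : Prop :=
  match p with
  | IRel _ _ | IEq _ _ => True
  | INeg q => iwf q
  | IAnd A F => forall k, A k -> iwf (F k)
  | IEx X q => card_lt X /\ iwf q
  end.

Fixpoint ifree {K : Type} (p : iform K) (x : K) : Prop :=
  match p with
  | IRel _ vs => In x vs
  | IEq a b => x = a \/ x = b
  | INeg q => ifree q x
  | IAnd A F => exists k, A k /\ ifree (F k) x
  | IEx X q => ~ X x /\ ifree q x
  end.

Definition isentence {K : Type} (p : iform K) : Prop :=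
  iwf p /\ forall x, ~ ifree p x.

(* Ordinals < kappa^+ as Brouwer trees with kappa-indexed suprema
   (these denote exactly the ordinals < kappa^+). *)
Inductive ord (K : Type) : Type :=
| O0
| OS (a : ord K)
| Olim (f : K -> ord K).
Arguments O0 {K}. Arguments OS {K}. Arguments Olim {K}.

Fixpoint ole {K : Type} (b a : ord K) : Prop :=
  match b with
  | O0 => True
  | OS b' =>
      (fix olt_b' (a : ord K) : Prop :=
         match a with
         | O0 => False
         | OS a' => ole b' a'
         | Olim g => exists k, olt_b' (g k)
         end) a
  | Olim f => forall k, ole (f k) a
  end.

Definition olt {K : Type} (b a : ord K) : Prop := ole (OS b) a.

Fixpoint rk_le {K : Type} (p : iform K) (a : ord K) : Prop :=
  match p with
  | IRel _ _ | IEq _ _ => True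
  | INeg q => rk_le q a
  | IAnd A F => forall k, A k -> rk_le (F k) a
  | IEx X q => exists b, olt b a /\ rk_le q b
  end.

Definition equiv_rank {K : Type} (ar : nat -> nat) (a : ord K) (M N : Lstr) : Prop :=
  forall p : iform K, isentence p -> rk_le p a ->
    ((forall s : K -> dom M, isat ar M s p) <-> (forall s : K -> dom N, isat ar N s p)).

Inductive kBorel {K : Type} : ((K -> K) -> Prop) -> Prop :=
| kB_empty : kBorel (fun _ => False)
| kB_basic (X : K -> Prop) (e : K -> K) :
    card_lt X -> kBorel (fun z => forall x, X x -> z x = e x)
| kB_compl (S : (K -> K) -> Prop) :
    kBorel S -> kBorel (fun z => ~ S z)
| kB_union (F : K -> (K -> K) -> Prop) :
    (forall k, kBorel (F k)) -> kBorel (fun z => exists k, F k z)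
| kB_inter (F : K -> (K -> K) -> Prop) :
    (forall k, kBorel (F k)) -> kBorel (fun z => forall k, F k z)
| kB_ext (S T : (K -> K) -> Prop) :
    kBorel S -> (forall z, S z <-> T z) -> kBorel T.

(* Main.v *)
Require Import Defs.
From Stdlib Require Import List Arith Lia Classical ClassicalEpsilon FunctionalExtensionality.
Import ListNotations.

Lemma ole_OS {K} (b a : ord K) : ole (OS b) a <->
  (match a with O0 => False | OS a' => ole b a' | Olim g => exists k, ole (OS b) (g k) end).
Proof. destruct a; simpl; tauto. Qed.

Lemma ole_lim {K} (x : ord K) f k : ole x (f k) -> ole x (Olim f).
Proof.
  revert f k. induction x as [|b IH|h IH]; intros f k H.
  - exact I.
  - apply ole_OS. exists k. exact H.
  - simpl in *. intro j. eapply IH. apply H.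
Qed.

Lemma ole_refl {K} (x : ord K) : ole x x.
Proof.
  induction x as [|b IH|h IH].
  - exact I.
  - apply ole_OS. exact IH.
  - simpl. intro k. eapply ole_lim. apply IH.
Qed.

Lemma ole_trans {K} (x : ord K) : forall y z, ole x y -> ole y z -> ole x z.
Proof.
  induction x as [|b IHb|f IHf]; intros y z H1 H2.
  - exact I.
  -
    revert z H1 H2. induction y as [|a IHa|g IHg]; intros z H1 H2.
    + apply ole_OS in H1. destruct H1.
    + apply ole_OS in H1. apply ole_OS in H2.
      clear IHa. revert H2. induction z as [|c IHc|h IHh]; intro H2.
      * destruct H2.
      * apply ole_OS. eapply IHb; eauto.
      * apply ole_OS. destruct H2 as [k Hk]. exists k. apply IHh. apply ole_OS. exact Hk.
    + apply ole_OS in H1. destruct H1 as [k Hk]. simpl in H2. eapply IHg; eauto.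
  - simpl in *. intro k. eapply IHf; eauto.
Qed.

Lemma rk_le_mono {K} (p : iform K) : forall a b, rk_le p a -> ole a b -> rk_le p b.
Proof.
  induction p as [m vs|x y|q IH|A F IH|X q IH]; intros a b H1 H2; simpl in *; auto.
  - eapply IH; eauto.
  - intros k Hk. eapply IH; eauto.
  - destruct H1 as [c [Hc Hq]]. exists c. split; auto. eapply ole_trans; eauto.
Qed.

Lemma isat_ext1 {K} ar (M : Lstr) (p : iform K) : forall s s' : K -> dom M,
  (forall v, ifree p v -> s v = s' v) -> isat ar M s p -> isat ar M s' p.
Proof.
  induction p as [m vs|x y|q IH|A F IH|X q IH]; intros s s' E; simpl in *.
  - intros [H1 H2]. split; auto. erewrite map_ext_in; [exact H2|]. intros v Hv. symmetry. auto.
  - rewrite (E x (or_introl eq_refl)), (E y (or_intror eq_refl)). auto.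
  - intros Hn Hs. apply Hn. eapply IH; [|exact Hs]. intros v Hv. symmetry; auto.
  - intros H k Hk. eapply IH; [|apply H; auto]. intros v Hv. apply E. eauto.
  - intros [s1 [Hs1 Hq]]. exists (fun v => if excluded_middle_informative (X v) then s1 v else s' v).
    split.
    + intros v Hv. destruct (excluded_middle_informative (X v)); tauto.
    + eapply IH; [|exact Hq]. intros v Hv. destruct (excluded_middle_informative (X v)); auto.
      rewrite Hs1; auto.
Qed.

Lemma isat_ext {K} ar (M : Lstr) (p : iform K) (s s' : K -> dom M) :
  (forall v, ifree p v -> s v = s' v) -> (isat ar M s p <-> isat ar M s' p).
Proof. intros E. split; apply isat_ext1; auto. intros v Hv; symmetry; auto. Qed.

Definition TrueF {K} : iform K := IAnd (fun _ => False) (fun k => IEq k k).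
Definition FalseF {K} : iform K := INeg TrueF.
Definition OrF {K} (A : K -> Prop) (F : K -> iform K) : iform K := INeg (IAnd A (fun k => INeg (F k))).
Definition And2 {K} (z0 : K) (p q : iform K) : iform K :=
  IAnd (fun _ => True) (fun k => if excluded_middle_informative (k = z0) then p else q).

Section F.
Context {K : Type} (ar : nat -> nat) (M : Lstr).
Lemma sat_True (s : K -> dom M) : isat ar M s TrueF.
Proof. simpl. intros _ []. Qed.
Lemma sat_False (s : K -> dom M) : ~ isat ar M s FalseF.
Proof. simpl. intro H; apply H. intros _ []. Qed.
Lemma sat_Or (s : K -> dom M) A F : isat ar M s (OrF A F) <-> exists k, A k /\ isat ar M s (F k).
Proof.
  simpl. split.
  - intro H. apply NNPP. intro Hn. apply H. intros k Hk Hs. apply Hn; eauto.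
  - intros [k [Hk Hs]] H. exact (H k Hk Hs).
Qed.
Lemma sat_And2 (s : K -> dom M) z0 z1 p q : z1 <> z0 ->
  (isat ar M s (And2 z0 p q) <-> isat ar M s p /\ isat ar M s q).
Proof.
  intro Hz. simpl. split.
  - intro H. split.
    + specialize (H z0 I). destruct (excluded_middle_informative (z0 = z0)); tauto.
    + specialize (H z1 I). destruct (excluded_middle_informative (z1 = z0)); tauto.
  - intros [H1 H2] k _. destruct (excluded_middle_informative (k = z0)); auto.
Qed.
End F.

Lemma free_True {K} (v : K) : ~ ifree TrueF v.
Proof. simpl. intros [k [[] _]]. Qed.
Lemma free_Or {K} A F (v : K) : ifree (OrF A F) v -> exists k, A k /\ ifree (F k) v.
Proof. simpl. auto. Qed.
Lemma free_And2 {K} (z0 : K) p q v : ifree (And2 z0 p q) v -> ifree p v \/ ifree q v.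
Proof. simpl. intros [k [_ H]]. destruct (excluded_middle_informative (k = z0)); auto. Qed.
Lemma wf_And2 {K} (z0 : K) p q : iwf p -> iwf q -> iwf (And2 z0 p q).
Proof. simpl. intros. destruct (excluded_middle_informative (k = z0)); auto. Qed.
Lemma rk_And2 {K} (z0 : K) p q a : rk_le p a -> rk_le q a -> rk_le (And2 z0 p q) a.
Proof. simpl. intros. destruct (excluded_middle_informative (k = z0)); auto. Qed.
Lemma wf_Or {K} (A : K -> Prop) F : (forall k, A k -> iwf (F k)) -> iwf (OrF A F).
Proof. simpl. auto. Qed.
Lemma rk_Or {K} (A : K -> Prop) F a : (forall k, A k -> rk_le (F k) a) -> rk_le (OrF A F) a.
Proof. simpl. auto. Qed.
Section Main.
Variable K : Type.
Variable lt : K -> K -> Prop.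
Hypothesis Hk : regular_cardinal K lt.

Lemma lt_irrefl : forall x, ~ lt x x. Proof. destruct Hk as [H _]; exact H. Qed.
Lemma lt_tr : forall x y z, lt x y -> lt y z -> lt x z. Proof. destruct Hk as [_ [H _]]; exact H. Qed.
Lemma lt_trich : forall x y, lt x y \/ x = y \/ lt y x. Proof. destruct Hk as [_ [_ [H _]]]; exact H. Qed.
Lemma lt_wf : well_founded lt. Proof. destruct Hk as [_ [_ [_ [H _]]]]; exact H. Qed.
Lemma K_inf : exists f : nat -> K, forall i j, f i = f j -> i = j. Proof. destruct Hk as [_ [_ [_ [_ [H _]]]]]; exact H. Qed.
Lemma seg_small : forall x, card_lt (fun y => lt y x). Proof. destruct Hk as [_ [_ [_ [_ [_ [H _]]]]]]; exact H. Qed.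
Lemma small_bounded : forall X, card_lt X -> exists b, forall x, X x -> lt x b.
Proof. destruct Hk as [_ [_ [_ [_ [_ [_ H]]]]]]; exact H. Qed.

Lemma lt_asym : forall x y, lt x y -> ~ lt y x.
Proof. intros x y H1 H2. exact (lt_irrefl _ (lt_tr _ _ _ H1 H2)). Qed.

Lemma small_sub (X Y : K -> Prop) : (forall x, X x -> Y x) -> card_lt Y -> card_lt X.
Proof. intros HXY HY [f [Hf1 Hf2]]. apply HY. exists f. split; auto. Qed.

Lemma bounded_small (X : K -> Prop) b : (forall x, X x -> lt x b) -> card_lt X.
Proof. intros H. eapply small_sub; [exact H| apply seg_small]. Qed.

Lemma small_image (X Y : K -> Prop) (f : K -> K) : card_lt X ->
  (forall y, Y y -> exists x, X x /\ y = f x) -> card_lt Y.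
Proof.
  intros HX HY [h [Hinj Himg]]. apply HX.
  assert (H : forall k, {x | X x /\ h k = f x}).
  { intro k. apply constructive_indefinite_description. apply HY, Himg. }
  exists (fun k => proj1_sig (H k)). split.
  - intros a b E. apply Hinj. destruct (H a) as [xa [? Ha]]; destruct (H b) as [xb [? Hb]]; simpl in E. subst. congruence.
  - intro k. destruct (H k) as [x [? ?]]; simpl; auto.
Qed.

Lemma max2 : forall a b, exists m, ~ lt m a /\ ~ lt m b /\ (m = a \/ m = b).
Proof.
  intros a b. destruct (lt_trich a b) as [H|[H|H]].
  - exists b. split; [intro; eapply lt_asym; eauto | split; [apply lt_irrefl| auto]].
  - subst. exists b. split; [apply lt_irrefl|split; [apply lt_irrefl|auto]].
  - exists a. split; [apply lt_irrefl | split; [intro; eapply lt_asym; eauto| auto]].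
Qed.

Lemma le_lt_tr : forall a b c, ~ lt b a -> lt b c -> lt a c.
Proof. intros a b c H1 H2. destruct (lt_trich a b) as [H|[H|H]]; [eapply lt_tr; eauto| subst; auto| contradiction]. Qed.
Lemma lt_le_tr : forall a b c, lt a b -> ~ lt c b -> lt a c.
Proof. intros a b c H1 H2. destruct (lt_trich b c) as [H|[H|H]]; [eapply lt_tr; eauto| subst; auto| contradiction]. Qed.
Lemma le_tr : forall a b c, ~ lt b a -> ~ lt c b -> ~ lt c a.
Proof. intros a b c H1 H2 H3. apply H2. exact (lt_le_tr c a b H3 H1). Qed.
Lemma nlt_le : forall a b, ~ lt a b -> b = a \/ lt b a.
Proof. intros a b H. destruct (lt_trich a b) as [?|[?|?]]; auto; contradiction. Qed.

Lemma least_exists (P : K -> Prop) : (exists x, P x) -> exists x, P x /\ forall y, P y -> ~ lt y x.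
Proof.
  intros [x Hx]. apply NNPP; intro Hn.
  assert (forall z, ~ P z). { intro z. induction z as [z IH] using (well_founded_ind lt_wf).
    intro Pz. apply Hn. exists z. split; auto. intros y Py Hy. exact (IH y Hy Py). }
  exact (H x Hx).
Qed.

Lemma Kinh : inhabited K.
Proof. destruct K_inf as [f _]. exact (inhabits (f 0)). Qed.


Variable pi : list K -> K.
Hypothesis Hpi : (forall u v, pi u = pi v -> u = v) /\ (forall k, exists u, pi u = k).

Lemma avoid (S : K -> Prop) : card_lt S -> exists h : K -> K,
  (forall a b, h a = h b -> a = b) /\ forall k, ~ S (h k).
Proof.
  intros HS. destruct (classic (exists j, forall k, ~ S (pi [k; j]))) as [[j Hj]|Hn].
  - exists (fun k => pi [k; j]). split; auto.
    intros a b E. apply (proj1 Hpi) in E. congruence.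
  - exfalso. apply HS.
    assert (H : forall j, {k | S (pi [k; j])}).
    { intro j. apply constructive_indefinite_description. apply NNPP; intro H. apply Hn. exists j.
      intros k Hk'. apply H; eauto. }
    exists (fun j => pi [proj1_sig (H j); j]). split.
    + intros a b E. apply (proj1 Hpi) in E. congruence.
    + intro j. exact (proj2_sig (H j)).
Qed.

Lemma no_max : forall b, exists c, lt b c.
Proof.
  intro b. apply NNPP; intro Hn.
  destruct (avoid _ (seg_small b)) as [h [Hinj Hh]].
  destruct K_inf as [f Hf].
  assert (E : forall k, h k = b).
  { intro k. destruct (lt_trich (h k) b) as [H|[H|H]]; auto. destruct (Hh k H). destruct Hn; eauto. }
  assert (f 0 = f 1) by (apply Hinj; rewrite !E; auto). apply Hf in H. discriminate.
Qed.

Lemma succ_ex : forall b, exists c, lt b c /\ forall y, lt y c -> lt y b \/ y = b.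
Proof.
  intro b. destruct (least_exists (fun c => lt b c) (no_max b)) as [c [Hc Hmin]].
  exists c. split; auto. intros y Hy. destruct (lt_trich y b) as [H|[H|H]]; auto.
  destruct (Hmin y H Hy).
Qed.

Lemma list_bound : forall l : list K, exists b, forall y, In y l -> lt y b.
Proof.
  induction l as [|a l IH].
  - destruct Kinh as [z]. exists z. intros y [].
  - destruct IH as [b Hb]. destruct (no_max a) as [c Hc]. destruct (max2 b c) as [m [H1 [H2 _]]].
    exists m. intros y [E|Hy].
    + subst. eapply lt_le_tr; eauto.
    + eapply lt_le_tr; eauto.
Qed.

Lemma fill (C : K -> Prop) (p : K -> K) : card_lt C ->
  (forall i j, C i -> C j -> p i = p j -> i = j) ->
  exists q : K -> K, (forall i j, q i = q j -> i = j) /\ forall i, C i -> q i = p i.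
Proof.
  intros HC Hp.
  assert (HI : card_lt (fun y => exists x, C x /\ y = p x)) by (eapply small_image; eauto).
  destruct (small_bounded _ HI) as [B HB].
  destruct (avoid _ (seg_small B)) as [h [Hh1 Hh2]].
  exists (fun i => if excluded_middle_informative (C i) then p i else h i). split.
  - intros i j. destruct (excluded_middle_informative (C i)) as [Ci|Ci];
      destruct (excluded_middle_informative (C j)) as [Cj|Cj]; intro E; auto.
    + exfalso. apply (Hh2 j). rewrite <- E. apply HB. eauto.
    + exfalso. apply (Hh2 i). rewrite E. apply HB. eauto.
  - intros i Ci. destruct (excluded_middle_informative (C i)); tauto.
Qed.

Definition pinv (k : K) : list K := proj1_sig (constructive_indefinite_description _ (proj2 Hpi k)).
Lemma pi_pinv k : pi (pinv k) = k.
Proof. unfold pinv. exact (proj2_sig (constructive_indefinite_description _ (proj2 Hpi k))). Qed.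
Lemma pinv_pi u : pinv (pi u) = u.
Proof. apply (proj1 Hpi). apply pi_pinv. Qed.

Definition zero : K := epsilon Kinh (fun x => forall y, ~ lt y x).
Lemma zero_least : forall y, ~ lt y zero.
Proof.
  unfold zero. apply (epsilon_spec Kinh (fun x => forall y, ~ lt y x)).
  destruct Kinh as [z]. destruct (least_exists (fun _ => True) (ex_intro _ z I)) as [x [_ Hx]].
  exists x. intros y; apply Hx; auto.
Qed.
Definition one : K := epsilon Kinh (fun x => lt zero x).
Lemma zero_lt_one : lt zero one.
Proof. unfold one. apply epsilon_spec. apply no_max. Qed.
Lemma one_neq_zero : one <> zero.
Proof. intro E. pose proof zero_lt_one. rewrite E in H. exact (lt_irrefl _ H). Qed.

Lemma is_zero_zero : is_zero lt zero.
Proof. exact zero_least. Qed.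
Lemma not_is_zero_one : ~ is_zero lt one.
Proof. intro H. exact (H zero zero_lt_one). Qed.

Lemma nodup_of (f : nat -> K) m : (forall i j, i < m -> j < m -> f i = f j -> i = j) -> NoDup (map f (seq 0 m)).
Proof.
  intro H. apply NoDup_map_NoDup_ForallPairs; [|apply seq_NoDup].
  intros a b Ha Hb. apply in_seq in Ha. apply in_seq in Hb. apply H; lia.
Qed.

Lemma is_nth_le m m' k : is_nth lt m k -> is_nth lt m' k -> m' <= m.
Proof.
  intros [f [Hf1 Hf2]] [g [Hg1 Hg2]].
  rewrite <- (length_seq m' 0), <- (length_map g), <- (length_seq m 0), <- (length_map f).
  apply NoDup_incl_length; [apply nodup_of; auto|].
  intros y Hy. apply in_map_iff in Hy. destruct Hy as [i [Ei Hi]]. apply in_seq in Hi.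
  assert (lt y k) by (apply Hg2; exists i; split; [lia|auto]).
  apply Hf2 in H. destruct H as [j [Hj Ej]]. apply in_map_iff. exists j. split; auto. apply in_seq. lia.
Qed.

Lemma is_nth_uniq m m' k : is_nth lt m k -> is_nth lt m' k -> m = m'.
Proof. intros H1 H2. pose proof (is_nth_le _ _ _ H1 H2). pose proof (is_nth_le _ _ _ H2 H1). lia. Qed.

Definition injOn {A : Type} (p : K -> A) (b : K) := forall i j, lt i b -> lt j b -> p i = p j -> i = j.
Definition extends (b : K) (p : K -> K) (c : K) (q : K -> K) := ~ lt c b /\ forall i, lt i b -> q i = p i.
Definition Dense (D : K -> (K -> K) -> Prop) :=
  forall b p, injOn p b -> exists c q, injOn q c /\ extends b p c q /\ D c q.
Definition Meets (g : K -> K) (D : K -> (K -> K) -> Prop) :=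
  exists c q, D c q /\ forall i, lt i c -> g i = q i.
Definition Bij (g : K -> K) := (forall a b, g a = g b -> a = b) /\ forall y, exists x, g x = y.

Lemma ext_refl b p : extends b p b p.
Proof. split; [apply lt_irrefl|auto]. Qed.
Lemma ext_trans b p c q d r : extends b p c q -> extends c q d r -> extends b p d r.
Proof.
  intros [H1 H2] [H3 H4]. split; [eapply le_tr; eauto|].
  intros i Hi. rewrite H4; [auto|]. eapply lt_le_tr; eauto.
Qed.

Lemma ext_range b p y : injOn p b -> exists c q, injOn q c /\ extends b p c q /\ exists i, lt i c /\ q i = y.
Proof.
  intros Hp. destruct (classic (exists i, lt i b /\ p i = y)) as [Hy|Hy].
  - exists b, p. split; auto. split; auto. apply ext_refl.
  - destruct (succ_ex b) as [c [Hbc Hc]].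
    exists c, (fun i => if excluded_middle_informative (i = b) then y else p i). split; [|split].
    + intros i j Hi Hj. destruct (excluded_middle_informative (i = b)) as [Ei|Ei];
        destruct (excluded_middle_informative (j = b)) as [Ej|Ej]; intro E.
      * congruence.
      * exfalso. apply Hy. exists j. split; [destruct (Hc j Hj); tauto|auto].
      * exfalso. apply Hy. exists i. split; [destruct (Hc i Hi); tauto|auto].
      * apply Hp; auto; [destruct (Hc i Hi)|destruct (Hc j Hj)]; tauto.
    + split; [apply lt_asym; auto|]. intros i Hi. destruct (excluded_middle_informative (i = b)); auto.
      subst; destruct (lt_irrefl _ Hi).
    + exists b. split; auto. destruct (excluded_middle_informative (b = b)); tauto.
Qed.

Lemma ext_dom b p k : injOn p b -> exists c q, injOn q c /\ extends b p c q /\ lt k c.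
Proof.
  intros Hp. destruct (no_max k) as [d Hd]. destruct (max2 b d) as [m [H1 [H2 _]]].
  destruct (fill (fun i => lt i b) p (seg_small b)) as [q [Hq1 Hq2]].
  { intros; apply Hp; auto. }
  exists m, q. split; [intros i j _ _; apply Hq1|]. split; [split; auto|].
  eapply lt_le_tr; eauto.
Qed.

Lemma step_ex (D : K -> (K -> K) -> Prop) (HD : Dense D) k b p : injOn p b ->
  exists c q, injOn q c /\ extends b p c q /\
    (exists c' q', D c' q' /\ ~ lt c c' /\ forall i, lt i c' -> q i = q' i) /\
    lt k c /\ exists i, lt i c /\ q i = k.
Proof.
  intros Hp. destruct (HD b p Hp) as [c1 [q1 [I1 [E1 D1]]]].
  destruct (ext_range c1 q1 k I1) as [c2 [q2 [I2 [E2 [i [Hi Hqi]]]]]].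
  destruct (ext_dom c2 q2 k I2) as [c3 [q3 [I3 [E3 Hk3]]]].
  exists c3, q3. split; auto. split; [eapply ext_trans; [eauto|eapply ext_trans; eauto]|].
  split; [|split; auto].
  - exists c1, q1. split; auto. pose proof (ext_trans _ _ _ _ _ _ E2 E3) as [H1 H2]. split; auto.
  - exists i. destruct E3 as [H1 H2]. split; [eapply lt_le_tr; eauto|]. rewrite H2; auto.
Qed.

Section Generic.
Variable e : K -> K -> (K -> K) -> Prop.
Hypothesis He : forall k, Dense (e k).
Variable b0 : K.
Variable p0 : K -> K.
Hypothesis Hp0 : injOn p0 b0.

Definition cond := (K * (K -> K))%type.
Definition inhc : inhabited cond := inhabits (b0, p0).
Definition inhK : inhabited K := Kinh.

Definition stepP k (c c' : cond) : Prop :=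
  injOn (snd c) (fst c) ->
  injOn (snd c') (fst c') /\ extends (fst c) (snd c) (fst c') (snd c') /\
    (exists c1 q1, e k c1 q1 /\ ~ lt (fst c') c1 /\ forall i, lt i c1 -> snd c' i = q1 i) /\
    lt k (fst c') /\ exists i, lt i (fst c') /\ snd c' i = k.

Definition stepF k (c : cond) : cond := epsilon inhc (stepP k c).

Lemma stepF_spec k c : stepP k c (stepF k c).
Proof.
  unfold stepF. apply epsilon_spec. destruct (classic (injOn (snd c) (fst c))) as [H|H].
  - destruct (step_ex _ (He k) k _ _ H) as [c' [q' Hs]]. exists (c', q'). intros _. exact Hs.
  - exists c. intro; contradiction.
Qed.

Definition limB k (r : K -> cond) : K :=
  epsilon inhK (fun m => ~ lt m b0 /\ forall j, lt j k -> ~ lt m (fst (r j))).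
Definition limC k (r : K -> cond) (i : K) : Prop := lt i b0 \/ exists j, lt j k /\ lt i (fst (r j)).
Definition valP k (r : K -> cond) (i v : K) : Prop :=
  (lt i b0 /\ v = p0 i) \/ exists j, lt j k /\ lt i (fst (r j)) /\ v = snd (r j) i.
Definition pc k r i : K := epsilon inhK (valP k r i).
Definition limQ k r : K -> K :=
  epsilon (inhabits p0) (fun q => injOn q (limB k r) /\ forall i, limC k r i -> q i = pc k r i).
Definition limit k r : cond := (limB k r, limQ k r).

Section Lim.
Variable k : K.
Variable r : K -> cond.
Hypothesis H1 : forall j, lt j k -> injOn (snd (r j)) (fst (r j)) /\ extends b0 p0 (fst (r j)) (snd (r j)).
Hypothesis H2 : forall j j', lt j k -> lt j' k -> lt j j' -> extends (fst (r j)) (snd (r j)) (fst (r j')) (snd (r j')).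

Lemma limB_spec : ~ lt (limB k r) b0 /\ forall j, lt j k -> ~ lt (limB k r) (fst (r j)).
Proof.
  unfold limB. apply (epsilon_spec inhK (fun m => ~ lt m b0 /\ forall j, lt j k -> ~ lt m (fst (r j)))).
  assert (HS : card_lt (fun b => exists j, lt j k /\ b = fst (r j))).
  { apply (small_image (fun j => lt j k) _ (fun j => fst (r j)) (seg_small k)).
    intros y [j [Hj E]]. exists j; auto. }
  destruct (small_bounded _ HS) as [B HB]. destruct (max2 B b0) as [m [M1 [M2 _]]].
  exists m. split; auto. intros j Hj. intro Hl. apply (lt_irrefl m).
  eapply lt_tr; [exact Hl|]. eapply lt_le_tr; [apply HB; eauto|auto].
Qed.

Lemma valP_uniq i v v' : valP k r i v -> valP k r i v' -> v = v'.
Proof.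
  intros [[Hi E]|[j [Hj [Hi E]]]] [[Hi' E']|[j' [Hj' [Hi' E']]]]; subst.
  - auto.
  - symmetry. apply (proj2 (proj2 (H1 j' Hj'))). auto.
  - apply (proj2 (proj2 (H1 j Hj))). auto.
  - destruct (lt_trich j j') as [L|[L|L]].
    + symmetry. apply (proj2 (H2 j j' Hj Hj' L)). auto.
    + subst; auto.
    + apply (proj2 (H2 j' j Hj' Hj L)). auto.
Qed.

Lemma pc_spec i : limC k r i -> valP k r i (pc k r i).
Proof.
  intro Hc. unfold pc. apply epsilon_spec. destruct Hc as [Hi|[j [Hj Hi]]].
  - exists (p0 i). left; auto.
  - exists (snd (r j) i). right. eauto.
Qed.

Lemma pc_inj i i' : limC k r i -> limC k r i' -> pc k r i = pc k r i' -> i = i'.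
Proof.
  intros Ci Ci' E.
  pose proof (pc_spec i Ci) as Vi. pose proof (pc_spec i' Ci') as Vi'.
  assert (Hcom : exists b p, injOn p b /\ lt i b /\ lt i' b /\ valP k r i (p i) /\ valP k r i' (p i')).
  { destruct Ci as [Hi|[j [Hj Hi]]]; destruct Ci' as [Hi'|[j' [Hj' Hi']]].
    - exists b0, p0. repeat split; auto; left; auto.
    - exists (fst (r j')), (snd (r j')). destruct (H1 j' Hj') as [I [X1 X2]].
      repeat split; auto; [eapply lt_le_tr; eauto| |]; right; exists j'; repeat split; auto.
      eapply lt_le_tr; eauto.
    - exists (fst (r j)), (snd (r j)). destruct (H1 j Hj) as [I [X1 X2]].
      repeat split; auto; [eapply lt_le_tr; eauto| |]; right; exists j; repeat split; auto.
      eapply lt_le_tr; eauto.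
    - destruct (max2 j j') as [m [M1 [M2 Em]]].
      assert (Hm : lt m k) by (destruct Em; subst; auto).
      assert (X : forall l, lt l k -> ~ lt m l -> extends (fst (r l)) (snd (r l)) (fst (r m)) (snd (r m))).
      { intros l Hl Hml. destruct (nlt_le _ _ Hml) as [El|Ll]; [subst; apply ext_refl|]. apply H2; auto. }
      destruct (X j Hj M1) as [Y1 Y2]. destruct (X j' Hj' M2) as [Z1 Z2].
      exists (fst (r m)), (snd (r m)). repeat split.
      + apply (H1 m Hm).
      + eapply lt_le_tr; eauto.
      + eapply lt_le_tr; eauto.
      + right. exists m. repeat split; auto. eapply lt_le_tr; eauto.
      + right. exists m. repeat split; auto. eapply lt_le_tr; eauto. }
  destruct Hcom as [b [p [I [Hi [Hi' [V1 V2]]]]]].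
  apply I; auto. rewrite <- (valP_uniq _ _ _ Vi V1), <- (valP_uniq _ _ _ Vi' V2). exact E.
Qed.

Lemma limC_small : card_lt (limC k r).
Proof.
  apply (bounded_small _ (limB k r)). destruct limB_spec as [B1 B2].
  intros i [Hi|[j [Hj Hi]]]; eapply lt_le_tr; eauto.
Qed.

Lemma limQ_spec : injOn (limQ k r) (limB k r) /\ forall i, limC k r i -> limQ k r i = pc k r i.
Proof.
  unfold limQ. apply (epsilon_spec (inhabits p0) (fun q => injOn q (limB k r) /\ forall i, limC k r i -> q i = pc k r i)).
  destruct (fill (limC k r) (pc k r) limC_small) as [q [Q1 Q2]].
  { intros; apply pc_inj; auto. }
  exists q. split; auto. intros i j _ _. apply Q1.
Qed.

Lemma limit_spec : injOn (snd (limit k r)) (fst (limit k r)) /\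
  extends b0 p0 (fst (limit k r)) (snd (limit k r)) /\
  forall j, lt j k -> extends (fst (r j)) (snd (r j)) (fst (limit k r)) (snd (limit k r)).
Proof.
  simpl. destruct limB_spec as [B1 B2]. destruct limQ_spec as [Q1 Q2].
  split; auto. split.
  - split; auto. intros i Hi. rewrite Q2; [|left; auto].
    destruct (pc_spec i (or_introl Hi)) as [[_ E]|[j [Hj [Hj' E]]]]; auto.
    rewrite E. apply (proj2 (proj2 (H1 j Hj))). auto.
  - intros j Hj. split; auto. intros i Hi.
    assert (C : limC k r i) by (right; eauto).
    rewrite Q2; auto. apply (valP_uniq i); [apply pc_spec; auto|]. right. eauto.
Qed.
End Lim.

Definition restr k (rec : forall j, lt j k -> cond) : K -> cond :=
  fun j => match excluded_middle_informative (lt j k) with left h => rec j h | right _ => (b0, p0) end.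
Definition FF k (rec : forall j, lt j k -> cond) : cond := stepF k (limit k (restr k rec)).
Definition cc : K -> cond := Fix lt_wf (fun _ => cond) FF.

Lemma cc_eq k : cc k = stepF k (limit k (restr k (fun j _ => cc j))).
Proof.
  unfold cc at 1. rewrite Fix_eq; [reflexivity|].
  intros x f g H. unfold FF. f_equal. f_equal. unfold restr. apply functional_extensionality.
  intro j. destruct (excluded_middle_informative (lt j x)); auto.
Qed.

Definition PP k : Prop :=
  injOn (snd (cc k)) (fst (cc k)) /\ extends b0 p0 (fst (cc k)) (snd (cc k)) /\
  (forall j, lt j k -> extends (fst (cc j)) (snd (cc j)) (fst (cc k)) (snd (cc k))) /\
  (exists c1 q1, e k c1 q1 /\ ~ lt (fst (cc k)) c1 /\ forall i, lt i c1 -> snd (cc k) i = q1 i) /\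
  lt k (fst (cc k)) /\ exists i, lt i (fst (cc k)) /\ snd (cc k) i = k.

Lemma PP_all : forall k, PP k.
Proof.
  intro k. induction k as [k IH] using (well_founded_ind lt_wf).
  set (r := restr k (fun j _ => cc j)).
  assert (Er : forall j, lt j k -> r j = cc j).
  { intros j Hj. unfold r, restr. destruct (excluded_middle_informative (lt j k)); tauto. }
  assert (L : injOn (snd (limit k r)) (fst (limit k r)) /\
    extends b0 p0 (fst (limit k r)) (snd (limit k r)) /\
    forall j, lt j k -> extends (fst (r j)) (snd (r j)) (fst (limit k r)) (snd (limit k r))).
  { apply limit_spec.
    - intros j Hj. rewrite Er; auto. destruct (IH j Hj) as [A [B _]]. auto.
    - intros j j' Hj Hj' Hjj. rewrite !Er; auto. destruct (IH j' Hj') as [_ [_ [C _]]]. auto. }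
  destruct L as [L1 [L2 L3]].
  pose proof (stepF_spec k (limit k r) L1) as [S1 [S2 [S3 [S4 S5]]]].
  assert (Ec : cc k = stepF k (limit k r)) by (apply cc_eq).
  rewrite <- Ec in S1, S2, S3, S4, S5.
  unfold PP.
  split; [auto|split; [|split; [|split; [auto|split; auto]]]].
  - eapply ext_trans; eauto.
  - intros j Hj. rewrite <- (Er j Hj). eapply ext_trans; eauto.
Qed.

Lemma cc_mono a m : ~ lt m a -> extends (fst (cc a)) (snd (cc a)) (fst (cc m)) (snd (cc m)).
Proof.
  intro H. destruct (nlt_le _ _ H) as [E|L]; [subst; apply ext_refl|].
  destruct (PP_all m) as [_ [_ [X _]]]. auto.
Qed.

Lemma cc_coh j k i : lt i (fst (cc j)) -> lt i (fst (cc k)) -> snd (cc j) i = snd (cc k) i.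
Proof.
  intros Hj Hk'. destruct (max2 j k) as [m [M1 [M2 _]]].
  destruct (cc_mono _ _ M1) as [_ A]. destruct (cc_mono _ _ M2) as [_ B].
  rewrite <- A, <- B; auto.
Qed.

Definition gg (i : K) : K := snd (cc i) i.

Lemma generic_ok : Bij gg /\ (forall i, lt i b0 -> gg i = p0 i) /\ forall k, Meets gg (e k).
Proof.
  assert (Cov : forall i, lt i (fst (cc i))) by (intro i; apply (PP_all i)).
  split; [split|split].
  - intros a b E. unfold gg in E. destruct (max2 a b) as [m [M1 [M2 _]]].
    destruct (cc_mono _ _ M1) as [A1 A2]. destruct (cc_mono _ _ M2) as [B1 B2].
    apply (proj1 (PP_all m)); [eapply lt_le_tr; eauto|eapply lt_le_tr; eauto|].
    rewrite A2, B2; auto.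
  - intro y. destruct (PP_all y) as [_ [_ [_ [_ [_ [i [Hi Ei]]]]]]].
    exists i. unfold gg. rewrite (cc_coh i y i); auto.
  - intros i Hi. unfold gg. destruct (PP_all i) as [_ [[_ X] _]]. auto.
  - intro k. destruct (PP_all k) as [_ [_ [_ [[c1 [q1 [D [Hc Hq]]]] _]]]].
    exists c1, q1. split; auto. intros i Hi. unfold gg.
    assert (lt i (fst (cc k))) by (eapply lt_le_tr; eauto).
    rewrite (cc_coh i k i); auto.
Qed.

End Generic.

Lemma generic_exists (e : K -> K -> (K -> K) -> Prop) : (forall k, Dense (e k)) ->
  forall b0 p0, injOn p0 b0 -> exists g, Bij g /\ (forall i, lt i b0 -> g i = p0 i) /\ forall k, Meets g (e k).
Proof. intros He b0 p0 Hp0. eexists. eapply generic_ok; eauto. Qed.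

Variable ar : nat -> nat.
Definition Mx (x : K -> K) : Lstr := M_code lt ar pi x.

Definition act (g x : K -> K) : K -> K := fun c =>
  match pinv c with
  | k :: s => if excluded_middle_informative
                 (exists m, is_nth lt m k /\ length s = ar m /\ rel (Mx x) m (map g s)) then one else zero
  | [] => zero
  end.

Lemma act_rel g x m s : rel (Mx (act g x)) m s <-> rel (Mx x) m (map g s).
Proof.
  simpl. unfold act. split.
  - intros [Hl [k [Hk' Hz]]]. rewrite pinv_pi in Hz.
    destruct (excluded_middle_informative _) as [[m' [Hm' [Hl' Hr]]]|Hn].
    + rewrite (is_nth_uniq _ _ _ Hk' Hm'). exact Hr.
    + destruct (Hz is_zero_zero).
  - intros [Hl [k [Hk' Hz]]]. rewrite length_map in Hl. split; auto. exists k. split; auto.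
    rewrite pinv_pi. destruct (excluded_middle_informative _) as [_|Hn].
    + apply not_is_zero_one.
    + exfalso. apply Hn. exists m. repeat split; auto. rewrite length_map; auto. exists k; auto.
Qed.

Lemma iso_refl M : iso ar M M.
Proof.
  exists (fun x => x). split; [exists (fun x => x); auto|]. intros m s _. rewrite map_id. tauto.
Qed.

Lemma iso_sym M N : iso ar M N -> iso ar N M.
Proof.
  intros [h [[g [Hgh Hhg]] Hr]]. exists g. split; [exists h; auto|].
  intros m s Hl. assert (E : map h (map g s) = s).
  { rewrite map_map. erewrite map_ext; [apply map_id|]. auto. }
  rewrite (Hr m (map g s)); [rewrite E; tauto|]. rewrite length_map; auto.
Qed.

Lemma iso_trans M N P : iso ar M N -> iso ar N P -> iso ar M P.
Proof.
  intros [h [[g [H1 H2]] Hr]] [h' [[g' [H1' H2']] Hr']].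
  exists (fun x => h' (h x)). split.
  - exists (fun y => g (g' y)). split; intros; [rewrite H1', H1|rewrite H2, H2']; auto.
  - intros m s Hl. rewrite (Hr m s Hl), (Hr' m (map h s)); [rewrite map_map; tauto|].
    rewrite length_map; auto.
Qed.

Lemma iso_act g x : Bij g -> iso ar (Mx (act g x)) (Mx x).
Proof.
  intros [Hi Hs].
  assert (Hg : forall y, {z | g z = y}) by (intro y; apply constructive_indefinite_description; auto).
  exists g. split.
  - exists (fun y => proj1_sig (Hg y)). split.
    + intro z. apply Hi. exact (proj2_sig (Hg (g z))).
    + intro y. exact (proj2_sig (Hg y)).
  - intros m s _. apply act_rel.
Qed.

Definition Dist (b : K) : iform K :=
  IAnd (fun c => exists i j, c = pi [i; j] /\ lt i b /\ lt j b /\ i <> j)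
       (fun c => match pinv c with [i; j] => INeg (IEq i j) | _ => TrueF end).

Lemma sat_Dist (M : Lstr) (s : K -> dom M) b : isat ar M s (Dist b) <-> injOn s b.
Proof.
  simpl. split.
  - intros H i j Hi Hj E. apply NNPP. intro Hn.
    specialize (H (pi [i; j])). rewrite pinv_pi in H. simpl in H.
    apply H; auto. exists i, j. auto.
  - intros H c [i [j [E [Hi [Hj Hn]]]]]. subst c. rewrite pinv_pi. simpl. intro E. apply Hn. apply H; auto.
Qed.

Lemma free_Dist b v : ifree (Dist b) v -> lt v b.
Proof.
  simpl. intros [c [[i [j [E [Hi [Hj _]]]]] Hf]]. subst c. rewrite pinv_pi in Hf. simpl in Hf.
  destruct Hf; subst; auto.
Qed.

Lemma wf_Dist b : iwf (Dist b).
Proof. simpl. intros c _. destruct (pinv c) as [|i [|j [|]]]; simpl; auto; intros; contradiction. Qed.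

Lemma rk_Dist b a : rk_le (Dist b) a.
Proof. simpl. intros c _. destruct (pinv c) as [|i [|j [|]]]; simpl; auto; intros; contradiction. Qed.


Definition segI (b c : K) : K -> Prop := fun v => ~ lt v b /\ lt v c.
Lemma segI_small b c : card_lt (segI b c).
Proof. apply (bounded_small _ c). intros v [_ H]; auto. Qed.
Lemma segI_out b c v : ~ segI b c v -> lt v c -> lt v b.
Proof. intros H1 H2. apply NNPP. intro H3. apply H1. split; auto. Qed.

Definition Mono (x : K -> K) (phi : K -> iform K) : Prop :=
  forall b p c q, injOn q c -> extends b p c q -> isat ar (Mx x) p (phi b) -> isat ar (Mx x) q (phi c).

Definition Synt (phi : K -> iform K) (a : ord K) : Prop :=
  forall b, iwf (phi b) /\ (forall v, ifree (phi b) v -> lt v b) /\ rk_le (phi b) a.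

Definition Truth (S : (K -> K) -> Prop) (x : K -> K) (phi : K -> iform K) :=
  exists e : K -> K -> (K -> K) -> Prop, (forall k, Dense (e k)) /\
    forall g, Bij g -> (forall k, Meets g (e k)) -> (S (act g x) <-> exists b, isat ar (Mx x) g (phi b)).

Definition Data (S : (K -> K) -> Prop) : Prop :=
  exists (phi : K -> iform K) (a : ord K), Synt phi a /\ forall x, Mono x phi /\ Truth S x phi.

Lemma Data_ext S T : Data S -> (forall z, S z <-> T z) -> Data T.
Proof.
  intros [phi [a [Hs Hx]]] E. exists phi, a. split; auto. intro x. destruct (Hx x) as [Hm [e [He Ht]]].
  split; auto. exists e. split; auto. intros g Hg Hme. rewrite <- E. auto.
Qed.

Lemma Data_empty : Data (fun _ => False).
Proof.
  exists (fun _ => FalseF), O0. split.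
  - intro b. split; [simpl; intros _ []|split; [|simpl; intros _ []]].
    simpl. intros v [k [[] _]].
  - intro x. split.
    + intros b p c q _ _ H. destruct (sat_False _ _ _ H).
    + exists (fun _ _ _ => True). split.
      * intros k b p Hp. exists b, p. split; auto. split; auto. apply ext_refl.
      * intros g _ _. split; [intros []|intros [b H]; destruct (sat_False _ _ _ H)].
Qed.

Lemma inj_injOn (g : K -> K) b : Bij g -> injOn g b.
Proof. intros [H _] i j _ _. apply H. Qed.

Lemma one_zero : one <> zero.
Proof. exact one_neq_zero. Qed.

Definition phiN (phi : K -> iform K) (b : K) : iform K :=
  IAnd (fun c => ~ lt c b) (fun c => INeg (IEx (segI b c) (And2 zero (Dist c) (phi c)))).

Lemma sat_N (M : Lstr) phi b (p : K -> dom M) : isat ar M p (phiN phi b) <->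
  forall c, ~ lt c b -> forall s' : K -> dom M, (forall v, ~ segI b c v -> s' v = p v) -> injOn s' c ->
    ~ isat ar M s' (phi c).
Proof.
  simpl. split.
  - intros H c Hc s' Hs' Hi Hp. apply (H c Hc). exists s'. split; auto.
    apply (sat_And2 ar M s' zero one); [apply one_zero|]. split; auto. apply sat_Dist; auto.
  - intros H c Hc [s' [Hs' Hq]]. apply (sat_And2 ar M s' zero one) in Hq; [|apply one_zero].
    destruct Hq as [Hd Hq]. apply sat_Dist in Hd. exact (H c Hc s' Hs' Hd Hq).
Qed.

Lemma sat_Nx x phi b (p : K -> K) : isat ar (Mx x) p (phiN phi b) <->
  forall c, ~ lt c b -> forall s' : K -> K, (forall v, ~ segI b c v -> s' v = p v) -> injOn s' c ->
    ~ isat ar (Mx x) s' (phi c).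
Proof. exact (sat_N (Mx x) phi b p). Qed.

Lemma Data_compl S : Data S -> Data (fun z => ~ S z).
Proof.
  intros [phi [a [Hs Hx]]]. exists (phiN phi), (OS a). split.
  - intro b. split; [|split].
    + simpl. intros c _. split; [apply segI_small|]. apply wf_And2; [apply wf_Dist|apply Hs].
    + simpl. intros v [c [Hc [Hv Hf]]]. apply free_And2 in Hf.
      assert (lt v c) by (destruct Hf as [Hf|Hf]; [apply free_Dist; auto|apply (Hs c); auto]).
      apply (segI_out b c); auto.
    + simpl. intros c _. exists a. split; [apply ole_OS, ole_refl|].
      apply rk_And2; [apply rk_Dist|apply Hs].
  - intro x. destruct (Hx x) as [Hm [e [He Ht]]]. split.
    + intros b p c q Hq [Ecb Epq] H. apply sat_Nx. pose proof (proj1 (sat_Nx x phi b p) H) as H0; clear H; rename H0 into H.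
      intros d Hd s' Hs' Hi Hphi.
      set (s'' := fun v => if excluded_middle_informative (lt v d) then s' v else p v).
      apply (H d (le_tr _ _ _ Ecb Hd) s'').
      * intros v Hv. unfold s''. destruct (excluded_middle_informative (lt v d)) as [L|L]; auto.
        assert (lt v b) by (apply (segI_out b d); auto).
        rewrite Hs'; [apply Epq; auto|]. intros [Hv1 _]. apply Hv1. eapply lt_le_tr; eauto.
      * intros i j Hi' Hj' E. apply Hi; auto. unfold s'' in E.
        destruct (excluded_middle_informative (lt i d)); destruct (excluded_middle_informative (lt j d)); tauto.
      * eapply isat_ext1; [|exact Hphi]. intros v Hv. unfold s''.
        destruct (excluded_middle_informative (lt v d)) as [L|L]; auto. destruct L. apply (Hs d); auto.
    + set (D := fun c q => isat ar (Mx x) q (phi c) \/ isat ar (Mx x) q (phiN phi c)).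
      exists (fun j => match pinv j with [i] => e i | _ => D end). split.
      * intro j. destruct (pinv j) as [|i [|]]; auto.
        -- intros b p Hp. destruct (classic (exists c q, injOn q c /\ extends b p c q /\ isat ar (Mx x) q (phi c))) as [[c [q [H1 [H2 H3]]]]|Hn].
           ++ exists c, q. split; auto. split; auto. left; auto.
           ++ exists b, p. split; auto. split; [apply ext_refl|]. right. apply sat_Nx.
              intros c Hc s' Hs' Hi Hphi. apply Hn. exists c, s'. split; auto. split; auto.
              split; auto. intros i0 Hib. apply Hs'. intros [Hv _]. contradiction.
        -- intros b p Hp. destruct (classic (exists c q, injOn q c /\ extends b p c q /\ isat ar (Mx x) q (phi c))) as [[c [q [H1 [H2 H3]]]]|Hn].
           ++ exists c, q. split; auto. split; auto. left; auto.
           ++ exists b, p. split; auto. split; [apply ext_refl|]. right. apply sat_Nx.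
              intros c Hc s' Hs' Hi Hphi. apply Hn. exists c, s'. split; auto. split; auto.
              split; auto. intros i0 Hib. apply Hs'. intros [Hv _]. contradiction.
      * intros g Hg Hme.
        assert (HmeS : forall k, Meets g (e k)).
        { intro k. specialize (Hme (pi [k])). rewrite pinv_pi in Hme. exact Hme. }
        assert (HmeD : Meets g D).
        { specialize (Hme (pi [])). rewrite pinv_pi in Hme. exact Hme. }
        specialize (Ht g Hg HmeS). split.
        -- intro HnS. destruct HmeD as [c [q [Hd Hgq]]].
           assert (Eq : forall v, lt v c -> q v = g v) by (intros; symmetry; auto).
           destruct Hd as [Hd|Hd].
           ++ exfalso. apply HnS. apply Ht. exists c. eapply isat_ext1; [|exact Hd].
              intros v Hv. apply Eq. apply (Hs c). auto.
           ++ exists c. eapply isat_ext1; [|exact Hd]. intros v Hv. apply Eq.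
              simpl in Hv. destruct Hv as [d [Hdc [Hv Hf]]]. apply free_And2 in Hf.
              assert (lt v d) by (destruct Hf as [Hf|Hf]; [apply free_Dist; auto|apply (Hs d); auto]).
              apply (segI_out c d); auto.
        -- intros [b Hb] HS. apply Ht in HS. destruct HS as [b' Hb'].
           destruct (max2 b b') as [m [M1 [M2 _]]].
           assert (Hx2 : isat ar (Mx x) g (phi m)).
           { apply (Hm b' g m g); auto; [apply inj_injOn; auto|split; auto]. }
           exact (proj1 (sat_Nx x phi b g) Hb m M1 g (fun _ _ => eq_refl) (inj_injOn g m Hg) Hx2).
Qed.


Definition phiU (phi : K -> K -> iform K) (b : K) : iform K :=
  IAnd (fun c => ~ lt c b) (fun c => INeg (IEx (segI b c) (And2 zero (Dist c)
    (INeg (OrF (fun d => ~ lt d c) (fun d => IEx (segI c d) (And2 zero (Dist d)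
       (OrF (fun _ => True) (fun k => phi k d))))))))).

Lemma sat_Ux x phi b (p : K -> K) : isat ar (Mx x) p (phiU phi b) <->
  forall c, ~ lt c b -> forall s' : K -> K, (forall v, ~ segI b c v -> s' v = p v) -> injOn s' c ->
    exists d, ~ lt d c /\ exists t : K -> K, (forall v, ~ segI c d v -> t v = s' v) /\ injOn t d /\
      exists k, isat ar (Mx x) t (phi k d).
Proof.
  unfold phiU. change (isat ar (Mx x) p
    (IAnd (fun c => ~ lt c b) (fun c => INeg (IEx (segI b c) (And2 zero (Dist c)
    (INeg (OrF (fun d => ~ lt d c) (fun d => IEx (segI c d) (And2 zero (Dist d)
       (OrF (fun _ => True) (fun k => phi k d))))))))))) with
    (forall c, ~ lt c b -> ~ exists s' : K -> K, (forall v, ~ segI b c v -> s' v = p v) /\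
       isat ar (Mx x) s' (And2 zero (Dist c)
    (INeg (OrF (fun d => ~ lt d c) (fun d => IEx (segI c d) (And2 zero (Dist d)
       (OrF (fun _ => True) (fun k => phi k d)))))))).
  split.
  - intros H c Hc s' Hs' Hi. apply NNPP. intro Hn. apply (H c Hc). exists s'. split; auto.
    apply (sat_And2 ar (Mx x) s' zero one); [apply one_zero|]. split; [apply (sat_Dist (Mx x)); auto|].
    intro Ho. apply Hn. apply (sat_Or ar (Mx x)) in Ho. destruct Ho as [d [Hd Hex]].
    exists d. split; auto. destruct Hex as [t [Ht Ha]].
    apply (sat_And2 ar (Mx x) t zero one) in Ha; [|apply one_zero]. destruct Ha as [Ha1 Ha2].
    exists t. split; auto. split; [apply (sat_Dist (Mx x)); auto|].
    apply (sat_Or ar (Mx x)) in Ha2. destruct Ha2 as [k [_ Hk']]. eauto.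
  - intros H c Hc [s' [Hs' Ha]].
    apply (sat_And2 ar (Mx x) s' zero one) in Ha; [|apply one_zero]. destruct Ha as [Ha1 Ha2].
    apply Ha2. apply (sat_Dist (Mx x)) in Ha1. destruct (H c Hc s' Hs' Ha1) as [d [Hd [t [Ht [Hti [k Hk']]]]]].
    apply (sat_Or ar (Mx x)). exists d. split; auto. exists t. split; auto.
    apply (sat_And2 ar (Mx x) t zero one); [apply one_zero|]. split; [apply (sat_Dist (Mx x)); auto|].
    apply (sat_Or ar (Mx x)). exists k. split; auto.
Qed.


Lemma choice_fun {A B : Type} (P : A -> B -> Prop) : (forall a, exists b, P a b) -> exists f, forall a, P a (f a).
Proof.
  intro H. exists (fun a => proj1_sig (constructive_indefinite_description _ (H a))).
  intro a. exact (proj2_sig (constructive_indefinite_description _ (H a))).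
Qed.

Lemma Data_union (F : K -> (K -> K) -> Prop) : (forall k, Data (F k)) -> Data (fun z => exists k, F k z).
Proof.
  intro HD.
  destruct (choice_fun (fun k (pa : (K -> iform K) * ord K) => Synt (fst pa) (snd pa) /\
     forall x, Mono x (fst pa) /\ Truth (F k) x (fst pa))) as [f Hf].
  { intro k. destruct (HD k) as [phi [a H]]. exists (phi, a). exact H. }
  set (phi := fun k => fst (f k)). set (a := fun k => snd (f k)).
  assert (Hs : forall k, Synt (phi k) (a k)) by (intro k; apply (Hf k)).
  assert (Hx : forall k x, Mono x (phi k) /\ Truth (F k) x (phi k)) by (intros k x; apply (Hf k)).
  clearbody phi a. clear Hf f.
  exists (phiU phi), (OS (OS (Olim a))). split.
  - intro b. split; [|split].
    + simpl. intros c _. split; [apply segI_small|]. apply wf_And2; [apply wf_Dist|].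
      simpl. intros d _. split; [apply segI_small|]. apply wf_And2; [apply wf_Dist|].
      simpl. intros k _. apply Hs.
    + simpl. intros v [c [Hc [Hv Hf]]]. apply free_And2 in Hf.
      assert (lt v c).
      { destruct Hf as [Hf|Hf]; [apply free_Dist; auto|].
        simpl in Hf. destruct Hf as [d [Hd [Hv' Hf']]]. apply free_And2 in Hf'.
        assert (lt v d).
        { destruct Hf' as [Hf'|Hf']; [apply free_Dist; auto|].
          simpl in Hf'. destruct Hf' as [k [_ Hk']]. apply (Hs k d); auto. }
        apply (segI_out c d); auto. }
      apply (segI_out b c); auto.
    + simpl. intros c _. exists (OS (Olim a)). split; [apply ole_OS, ole_refl|].
      apply rk_And2; [apply rk_Dist|]. simpl. intros d _. exists (Olim a).
      split; [apply ole_OS, ole_refl|]. apply rk_And2; [apply rk_Dist|]. simpl. intros k _.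
      eapply rk_le_mono; [apply (Hs k d)|]. eapply ole_lim. apply ole_refl.
  - intro x.
    assert (Mk : forall k, Mono x (phi k)) by (intro k; apply (Hx k x)).
    split.
    + intros b p c q Hq [Ecb Epq] H. apply sat_Ux. pose proof (proj1 (sat_Ux x phi b p) H) as H'. clear H.
      intros c' Hc' s' Hs' Hi.
      set (s'' := fun v => if excluded_middle_informative (lt v c') then s' v else p v).
      destruct (H' c' (le_tr _ _ _ Ecb Hc') s'') as [d [Hd [t [Ht [Hti [k Hk']]]]]].
      * intros v Hv. unfold s''. destruct (excluded_middle_informative (lt v c')) as [L|L]; auto.
        assert (lt v b) by (apply (segI_out b c'); auto).
        rewrite Hs'; [apply Epq; auto|]. intros [Hv1 _]. apply Hv1. eapply lt_le_tr; eauto.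
      * intros i j Hi' Hj' E. apply Hi; auto. unfold s'' in E.
        destruct (excluded_middle_informative (lt i c')); destruct (excluded_middle_informative (lt j c')); tauto.
      * exists d. split; auto.
        exists (fun v => if excluded_middle_informative (lt v d) then t v else s' v). split; [|split].
        -- intros v Hv. destruct (excluded_middle_informative (lt v d)) as [L|L]; auto.
           rewrite Ht; auto. unfold s''. destruct (excluded_middle_informative (lt v c')) as [L'|L']; auto.
           destruct L'. apply (segI_out c' d); auto.
        -- intros i j Hi' Hj' E. apply Hti; auto.
           destruct (excluded_middle_informative (lt i d)); destruct (excluded_middle_informative (lt j d)); tauto.
        -- exists k. eapply isat_ext1; [|exact Hk']. intros v Hv.
           destruct (excluded_middle_informative (lt v d)) as [L|L]; auto. destruct L. apply (Hs k d); auto.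
    + destruct (choice_fun (fun k (e : K -> K -> (K -> K) -> Prop) => (forall j, Dense (e j)) /\ forall g, Bij g -> (forall j, Meets g (e j)) ->
         (F k (act g x) <-> exists b, isat ar (Mx x) g (phi k b)))) as [ee Hee].
      { intro k. apply (Hx k x). }
      set (D := fun c (q : K -> K) => (exists k, isat ar (Mx x) q (phi k c)) \/
             (forall d r, injOn r d -> extends c q d r -> forall k, ~ isat ar (Mx x) r (phi k d))).
      exists (fun j => match pinv j with [k; i] => ee k i | _ => D end). split.
      * intro j.
        assert (HDd : Dense D).
        { intros b p Hp. destruct (classic (exists c q, injOn q c /\ extends b p c q /\ exists k, isat ar (Mx x) q (phi k c))) as [[c [q [H1 [H2 H3]]]]|Hn].
          - exists c, q. split; auto. split; auto. left; auto.
          - exists b, p. split; auto. split; [apply ext_refl|]. right.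
            intros d r Hr Ebr k Hk'. apply Hn. exists d, r. eauto. }
        destruct (pinv j) as [|k [|i [|]]]; auto. apply (proj1 (Hee k)).
      * intros g Hg Hme.
        assert (HmeS : forall k i, Meets g (ee k i)).
        { intros k i. specialize (Hme (pi [k; i])). rewrite pinv_pi in Hme. exact Hme. }
        assert (HmeD : Meets g D).
        { specialize (Hme (pi [])). rewrite pinv_pi in Hme. exact Hme. }
        split.
        -- intros [k Hk']. apply (proj2 (Hee k) g Hg (HmeS k)) in Hk'. destruct Hk' as [b Hb].
           exists b. apply sat_Ux. intros c Hc s' Hs' Hi. exists c. split; [apply lt_irrefl|].
           exists s'. split; auto. split; auto. exists k.
           apply (Mk k b g c s'); auto. split; auto. intros i Hib. apply Hs'. intros [Hv _]. contradiction.
        -- intros [b Hb]. destruct HmeD as [c0 [q [Hd Hgq]]].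
           destruct Hd as [[k Hk']|Hd].
           ++ exists k. apply (proj2 (Hee k) g Hg (HmeS k)). exists c0. eapply isat_ext1; [|exact Hk'].
              intros v Hv. symmetry. apply Hgq. apply (Hs k c0); auto.
           ++ exfalso. destruct (max2 b c0) as [m [M1 [M2 _]]].
              destruct (proj1 (sat_Ux x phi b g) Hb m M1 g (fun _ _ => eq_refl) (inj_injOn g m Hg))
                as [d [Hd' [t [Ht [Hti [k Hk']]]]]].
              assert (Ext : extends c0 q d t).
              2: exact (Hd d t Hti Ext k Hk').
              split; [eapply le_tr; eauto|]. intros i Hi.
              rewrite Ht; [apply Hgq; auto|]. intros [Hv _]. apply Hv. eapply lt_le_tr; eauto.
Qed.


Definition mof (k : K) (s : list K) : nat := epsilon (inhabits 0) (fun m => is_nth lt m k /\ length s = ar m).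

Definition theta (e0 : K -> K) (c : K) : iform K :=
  match pinv c with
  | k :: s =>
      if excluded_middle_informative (exists m, is_nth lt m k /\ length s = ar m) then
        (if excluded_middle_informative (e0 c = one) then IRel (mof k s) s
         else if excluded_middle_informative (e0 c = zero) then INeg (IRel (mof k s) s) else FalseF)
      else (if excluded_middle_informative (e0 c = zero) then TrueF else FalseF)
  | [] => if excluded_middle_informative (e0 c = zero) then TrueF else FalseF
  end.

Lemma sat_theta x (g : K -> K) e0 c : isat ar (Mx x) g (theta e0 c) <-> act g x c = e0 c.
Proof.
  pose proof one_zero as Hoz.
  unfold theta, act. destruct (pinv c) as [|k s].
  - destruct (excluded_middle_informative (e0 c = zero)) as [E|E].
    + rewrite E. split; auto. intros _. apply sat_True.
    + split; [intro H; destruct (sat_False _ _ _ H)|intro H; congruence].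
  - destruct (excluded_middle_informative (exists m, is_nth lt m k /\ length s = ar m)) as [V|NV].
    + assert (Hm0 : is_nth lt (mof k s) k /\ length s = ar (mof k s)).
      { unfold mof. apply (epsilon_spec (inhabits 0) (fun m => is_nth lt m k /\ length s = ar m)). exact V. }
      assert (Ec : (exists m, is_nth lt m k /\ length s = ar m /\ rel (Mx x) m (map g s)) <->
                   rel (Mx x) (mof k s) (map g s)).
      { split.
        - intros [m' [H1 [H2 H3]]]. rewrite (is_nth_uniq _ _ _ (proj1 Hm0) H1). exact H3.
        - intro H. exists (mof k s). tauto. }
      assert (Es : isat ar (Mx x) g (IRel (mof k s) s) <-> rel (Mx x) (mof k s) (map g s)).
      { change (length s = ar (mof k s) /\ rel (Mx x) (mof k s) (map g s) <-> rel (Mx x) (mof k s) (map g s)).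
        tauto. }
      destruct (excluded_middle_informative (exists m, is_nth lt m k /\ length s = ar m /\ rel (Mx x) m (map g s))) as [C|C].
      * destruct (excluded_middle_informative (e0 c = one)) as [E1|E1].
        -- rewrite E1. split; auto. intros _. apply Es, Ec, C.
        -- destruct (excluded_middle_informative (e0 c = zero)) as [E0|E0].
           ++ rewrite E0. split; [|congruence]. intro H. destruct (H (proj2 Es (proj1 Ec C))).
           ++ split; [intro H; destruct (sat_False _ _ _ H)|intro H; congruence].
      * destruct (excluded_middle_informative (e0 c = one)) as [E1|E1].
        -- rewrite E1. split; [|congruence]. intro H. destruct C. apply Ec, Es, H.
        -- destruct (excluded_middle_informative (e0 c = zero)) as [E0|E0].
           ++ rewrite E0. split; auto. intros _ H. apply C, Ec, Es, H.
           ++ split; [intro H; destruct (sat_False _ _ _ H)|intro H; congruence].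
    + destruct (excluded_middle_informative (exists m, is_nth lt m k /\ length s = ar m /\ rel (Mx x) m (map g s))) as [C|C].
      { exfalso. apply NV. destruct C as [m [H1 [H2 _]]]. eauto. }
      destruct (excluded_middle_informative (e0 c = zero)) as [E|E].
      * rewrite E. split; auto. intros _. apply sat_True.
      * split; [intro H; destruct (sat_False _ _ _ H)|intro H; congruence].
Qed.

Lemma theta_props e0 c : iwf (theta e0 c) /\ (forall a, rk_le (theta e0 c) a) /\
  (forall v, ifree (theta e0 c) v -> In v (pinv c)).
Proof.
  unfold theta. destruct (pinv c) as [|k s].
  - destruct (excluded_middle_informative (e0 c = zero)); simpl; split; try split;
      try (intros; contradiction); try (intros; exact I); firstorder.
  - destruct (excluded_middle_informative (exists m, is_nth lt m k /\ length s = ar m));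
    [destruct (excluded_middle_informative (e0 c = one));
      [|destruct (excluded_middle_informative (e0 c = zero))]
    |destruct (excluded_middle_informative (e0 c = zero))]; simpl; split; try split;
      try (intros; contradiction); try (intros; exact I); try (intros; right; auto); firstorder.
Qed.

Lemma Data_basic (X : K -> Prop) (e0 : K -> K) : card_lt X -> Data (fun z => forall c, X c -> z c = e0 c).
Proof.
  intro HX.
  destruct (choice_fun (fun (l : list K) b => forall y, In y l -> lt y b) list_bound) as [bl Hbl].
  assert (HI : card_lt (fun y => exists c, X c /\ y = bl (pinv c))).
  { apply (small_image X _ (fun c => bl (pinv c)) HX). intros y [c [Hc E]]. eauto. }
  destruct (small_bounded _ HI) as [gam Hgam].
  assert (Hfree : forall c v, X c -> ifree (theta e0 c) v -> lt v gam).
  { intros c v Hc Hv. apply (proj2 (proj2 (theta_props e0 c))) in Hv.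
    eapply lt_tr; [apply Hbl; eauto|]. apply Hgam. eauto. }
  set (phi := fun b => if excluded_middle_informative (~ lt b gam) then IAnd X (theta e0) else FalseF).
  exists phi, O0. split.
  - intro b. unfold phi. destruct (excluded_middle_informative (~ lt b gam)) as [L|L].
    + split; [|split].
      * simpl. intros c _. apply theta_props.
      * simpl. intros v [c [Hc Hv]]. eapply lt_le_tr; [eapply Hfree; eauto|auto].
      * simpl. intros c _. apply theta_props.
    + split; [|split].
      * simpl. intros _ []. 
      * simpl. intros v [k [[] _]].
      * simpl. intros _ [].
  - intro x. split.
    + intros b p c q Hq [Ecb Epq]. unfold phi.
      destruct (excluded_middle_informative (~ lt b gam)) as [L|L];
        [|intro H; destruct (sat_False _ _ _ H)].
      destruct (excluded_middle_informative (~ lt c gam)) as [L'|L'];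
        [|destruct L'; eapply le_tr; eauto].
      apply isat_ext1. intros v [c' [Hc' Hv]]. symmetry. apply Epq.
      eapply lt_le_tr; [eapply Hfree; eauto|auto].
    + exists (fun _ _ _ => True). split.
      * intros k b p Hp. exists b, p. split; auto. split; auto. apply ext_refl.
      * intros g Hg _. split.
        -- intro H. exists gam. unfold phi. destruct (excluded_middle_informative (~ lt gam gam)) as [L|L];
             [|destruct L; apply lt_irrefl].
           intros c Hc. apply sat_theta. auto.
        -- intros [b Hb] c Hc. unfold phi in Hb. destruct (excluded_middle_informative (~ lt b gam)) as [L|L];
             [|destruct (sat_False _ _ _ Hb)].
           apply (sat_theta x g e0 c). apply Hb. auto.
Qed.

Lemma kBorel_Data S : kBorel S -> Data S.
Proof.
  induction 1 as [|X e0 HX|S0 H0 IH|F H0 IH|F H0 IH|S0 T0 H0 IH E].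
  - apply Data_empty.
  - apply Data_basic; auto.
  - apply Data_compl; auto.
  - apply Data_union; auto.
  - apply (Data_ext (fun z => ~ exists k, ~ F k z)).
    + apply Data_compl. apply Data_union. intro k. apply Data_compl. auto.
    + intro z. split.
      * intros H k. apply NNPP. intro Hn. apply H. eauto.
      * intros H [k Hk']. apply Hk', H.
  - eapply Data_ext; eauto.
Qed.


Lemma main_section (eta : K -> K)
  (Hclose : forall a : ord K, exists xi : K -> K,
      ~ iso ar (Mx xi) (Mx eta) /\ equiv_rank ar a (Mx xi) (Mx eta)) :
  ~ kBorel (fun z : K -> K => iso ar (Mx z) (Mx eta)).
Proof.
  intro HB. apply kBorel_Data in HB. destruct HB as [phi [a [Hs Hx]]].
  set (psi := OrF (fun _ => True) (fun b => IEx (fun v => lt v b) (And2 zero (Dist b) (phi b)))).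
  assert (Char : forall x, (forall s : K -> K, isat ar (Mx x) s psi) <-> iso ar (Mx x) (Mx eta)).
  { intro x. destruct (Hx x) as [_ [e [He Ht]]]. split.
    - intro H. specialize (H (fun v => v)). apply (sat_Or ar (Mx x)) in H.
      destruct H as [b [_ [s' [_ Hs']]]].
      apply (sat_And2 ar (Mx x) s' zero one) in Hs'; [|apply one_zero]. destruct Hs' as [Hd Hp].
      apply (sat_Dist (Mx x)) in Hd.
      destruct (generic_exists e He b s' Hd) as [g [Hg [Hgs Hm]]].
      assert (Hpg : isat ar (Mx x) g (phi b)).
      { eapply isat_ext1; [|exact Hp]. intros v Hv. symmetry. apply Hgs. apply (Hs b); auto. }
      assert (HO : iso ar (Mx (act g x)) (Mx eta)) by (apply (Ht g Hg Hm); eauto).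
      eapply iso_trans; [apply iso_sym, iso_act; exact Hg|exact HO].
    - intros HO s.
      assert (Hz : injOn (fun v : K => v) zero) by (intros i j _ _ E; exact E).
      destruct (generic_exists e He zero (fun v => v) Hz) as [g [Hg [_ Hm]]].
      assert (HO' : iso ar (Mx (act g x)) (Mx eta)) by (eapply iso_trans; [apply iso_act; exact Hg|exact HO]).
      apply (Ht g Hg Hm) in HO'. destruct HO' as [b Hb].
      apply (sat_Or ar (Mx x)). exists b. split; auto.
      exists (fun v => if excluded_middle_informative (lt v b) then g v else s v). split.
      + intros v Hv. destruct (excluded_middle_informative (lt v b)); tauto.
      + apply (sat_And2 ar (Mx x) _ zero one); [apply one_zero|]. split.
        * apply (sat_Dist (Mx x)). intros i j Hi Hj E.
          destruct (excluded_middle_informative (lt i b)); destruct (excluded_middle_informative (lt j b)); try tauto.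
          apply (proj1 Hg). exact E.
        * eapply isat_ext1; [|exact Hb]. intros v Hv.
          destruct (excluded_middle_informative (lt v b)) as [L|L]; auto. destruct L. apply (Hs b); auto. }
  destruct (Hclose (OS a)) as [xi [Hni Heq]].
  assert (Hsen : isentence psi).
  { split.
    + apply wf_Or. intros b _. simpl. split; [apply seg_small|]. apply wf_And2; [apply wf_Dist|apply Hs].
    + intros v Hv. apply free_Or in Hv. destruct Hv as [b [_ [Hv Hf]]]. apply Hv.
      apply free_And2 in Hf. destruct Hf as [Hf|Hf]; [apply free_Dist; auto|apply (Hs b); auto]. }
  assert (Hrk : rk_le psi (OS a)).
  { apply rk_Or. intros b _. simpl. exists a. split; [apply ole_OS, ole_refl|].
    apply rk_And2; [apply rk_Dist|apply Hs]. }
  apply Hni. apply Char. apply (proj2 (Heq psi Hsen Hrk)).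
  apply Char. apply iso_refl.
Qed.

End Main.

Theorem theorem4p5 (K : Type) (lt : K -> K -> Prop)
  (Hkappa : regular_cardinal K lt)
  (ar : nat -> nat)
  (pi : list K -> K)
  (Hpi : (forall u v, pi u = pi v -> u = v) /\ (forall k, exists u, pi u = k))
  (T : fo -> Prop) (HT : complete_theory ar T)
  (eta : K -> K) (Heta : fo_models ar (M_code lt ar pi eta) T)
  (Hclose : forall a : ord K, exists xi : K -> K,
      fo_models ar (M_code lt ar pi xi) T /\
      ~ iso ar (M_code lt ar pi xi) (M_code lt ar pi eta) /\
      equiv_rank ar a (M_code lt ar pi xi) (M_code lt ar pi eta)) :
  ~ kBorel (fun zeta : K -> K => iso ar (M_code lt ar pi zeta) (M_code lt ar pi eta)).
Proof.
  apply (main_section K lt Hkappa pi Hpi ar eta).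
  intro a. destruct (Hclose a) as [xi [_ [H1 H2]]]. exists xi. split; auto.
Qed.
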